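(* Let $q$ be a power of an odd prime, $j\in\mathbb F_q$, $S_j=\{x\in\mathbb F_q^d:\|x\|=j\}$, $A\subset S_j$, $B\subset\mathbb F_q^d$, and for $t\in\mathbb F_q$ let $\mu(t)$ be the number of pairs $(a,b)\in A\times B$ with $\|a-b\|=t$. Then \[\sum_{t\in\mathbb F_q}\mu^2(t)\le\frac{|A|^2|B|^2}{q}+q^{d-1}|A||B|+q^{-2}\eta^d(-1)G_1^d|A|\sum_{b,b'\in B,\ s,r\ne0}\eta^d(r)\,\chi\Big(jr+\frac{s^2\|b'-b\|}{r}\Big)\chi\big(s(\|b'\|-\|b\|)\big).\]
   Context: $\chi$ is a nontrivial additive character of $\mathbb F_q$, $\|x\|=x_1^2+\cdots+x_d^2$, $\eta$ is the quadratic character of $\mathbb F_q^*$, $G_1=\sum_{t\in\mathbb F_q^*}\eta(t)\chi(t)$ is the standard Gauss sum, and $s,r$ range over $\mathbb F_q^*$. *)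

(* Defs.v *)
From mathcomp Require Import all_boot all_order all_algebra all_field.
Set Implicit Arguments. Unset Strict Implicit. Unset Printing Implicit Defensive.
Import Order.TTheory GRing.Theory Num.Theory.
Local Open Scope ring_scope.

Definition additive_char (F : finFieldType) (chi : F -> algC) : Prop :=
  chi 0 = 1 /\ forall x y : F, chi (x + y) = chi x * chi y.

Definition nontrivial_char (F : finFieldType) (chi : F -> algC) : Prop :=
  exists x : F, chi x != 1.

Definition eta (F : finFieldType) (t : F) : algC :=
  if t == 0 then 0 else if [exists y : F, y ^+ 2 == t] then 1 else -1.

Definition qnorm (F : finFieldType) (d : nat) (x : 'rV[F]_d) : F :=
  \sum_(i < d) x ord0 i ^+ 2.

Definition sphere (F : finFieldType) (d : nat) (j : F) : {set 'rV[F]_d} :=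
  [set x | qnorm x == j].

Definition gauss1 (F : finFieldType) (chi : F -> algC) : algC :=
  \sum_(t : F | t != 0) eta t * chi t.

Definition mu (F : finFieldType) (d : nat) (A B : {set 'rV[F]_d}) (t : F) : nat :=
  #|[set p : 'rV[F]_d * 'rV[F]_d | (p.1 \in A) && (p.2 \in B) && (qnorm (p.1 - p.2) == t)]|.

(* Main.v *)
Require Import Defs.
From mathcomp Require Import all_boot all_order all_algebra all_field all_fingroup all_solvable.
From mathcomp Require Import ring.
Set Implicit Arguments. Unset Strict Implicit. Unset Printing Implicit Defensive.
Import Order.TTheory GRing.Theory Num.Theory.
Local Open Scope ring_scope.


Section Chars.
Variable F : finFieldType.
Variable chi : F -> algC.
Hypothesis chi0 : chi 0 = 1.
Hypothesis chiD : forall x y, chi (x + y) = chi x * chi y.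
Hypothesis chint : exists x, chi x != 1.

Lemma chi_sum (I : Type) (r : seq I) (P : pred I) (f : I -> F) :
  chi (\sum_(i <- r | P i) f i) = \prod_(i <- r | P i) chi (f i).
Proof. exact: (big_morph chi chiD chi0). Qed.

Lemma chiNmul x : chi x * chi (- x) = 1.
Proof. by rewrite -chiD subrr chi0. Qed.

Lemma chi_neq0 x : chi x != 0.
Proof. by apply/eqP => h; have := chiNmul x; rewrite h mul0r => /eqP; rewrite eq_sym oner_eq0. Qed.

Lemma chiMn x n : chi (x *+ n) = chi x ^+ n.
Proof. by elim: n => [|n IH]; rewrite ?mulr0n ?expr0 ?chi0 // mulrS exprS chiD IH. Qed.

Lemma chi_norm x : `|chi x| = 1.
Proof.
have [p pr pc] := finPcharP F.
have h : chi x ^+ p = 1.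
  by rewrite -chiMn -mulr_natr (pcharf0 pc) mulr0 chi0.
have : `|chi x| ^+ p == 1 by rewrite -normrX h normr1.
by rewrite pexpr_eq1 ?prime_gt0 // => /eqP.
Qed.

Lemma chi_conj x : (chi x)^* = chi (- x).
Proof.
have h1 : chi x * (chi x)^* = 1 by rewrite -normCK chi_norm expr1n.
apply: (mulfI (chi_neq0 x)); by rewrite h1 chiNmul.
Qed.

Lemma sum_chi : \sum_x chi x = 0.
Proof.
have [x0 hx0] := chint.
have : \sum_x chi x = chi x0 * \sum_x chi x.
  rewrite mulr_sumr (reindex_inj (addrI x0)) /=.
  by apply: eq_bigr => y _; rewrite chiD.
move/eqP; rewrite -subr_eq0 -{1}(mul1r (\sum_x chi x)) -mulrBl mulf_eq0 subr_eq0 eq_sym.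
by rewrite (negbTE hx0) => /eqP.
Qed.

Lemma sum_chi_mul c : \sum_s chi (s * c) = if c == 0 then #|F|%:R else 0.
Proof.
case: eqP => [->|/eqP cn0].
  by under eq_bigr do rewrite mulr0 chi0; rewrite sumr_const.
transitivity (\sum_x chi x); last exact: sum_chi.
by rewrite [RHS](reindex_inj (mulIf cn0)).
Qed.

End Chars.


Lemma two_neq0 (F : finFieldType) : odd #|F| -> (2%:R : F) != 0.
Proof.
move=> oddF; apply/negP => /eqP h2.
have h : (#[(1%R : F)]%g %| 2)%N.
  by rewrite order_dvdn FinRing.zmodXgE FinRing.zmod1gE h2.
have h1 : (#[(1%R : F)]%g %| #|[set: F]|)%N by apply: order_dvdG; rewrite inE.
have hn : (#[(1%R : F)]%g != 1)%N by rewrite order_eq1 FinRing.zmod1gE oner_neq0.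
move: h; rewrite dvdn_divisors // !inE /=.
case/orP => /eqP he; first by rewrite he in hn.
by move: h1; rewrite he cardsT dvdn2 oddF.
Qed.

Section Quad.
Variable F : finFieldType.
Hypothesis oddF : odd #|F|.

Lemma eta0 : eta (0 : F) = 0.
Proof. by rewrite /eta eqxx. Qed.

Lemma eta_nz (u : F) : u != 0 -> eta u = if [exists y : F, y ^+ 2 == u] then 1 else -1.
Proof. by rewrite /eta => /negbTE ->. Qed.

Lemma eta_sqr (u : F) : u != 0 -> eta u ^+ 2 = 1.
Proof. by move=> /eta_nz ->; case: ifP; rewrite ?expr1n ?sqrrN ?expr1n. Qed.

Lemma eta_sq (y b : F) : y != 0 -> eta (y ^+ 2 * b) = eta b.
Proof.
move=> yn0; have [->|bn0] := eqVneq b 0; first by rewrite mulr0.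
have y2 : y ^+ 2 != 0 by rewrite sqrf_eq0.
rewrite !eta_nz ?mulf_neq0 //.
suff -> : [exists z : F, z ^+ 2 == y ^+ 2 * b] = [exists z : F, z ^+ 2 == b] by [].
apply/existsP/existsP => [[z /eqP hz]|[z /eqP hz]].
  exists (z / y); apply/eqP; rewrite expr_div_n hz mulrC mulKf //.
exists (y * z); by rewrite exprMn hz.
Qed.

Definition nroots (u : F) : algC := \sum_(y : F | y ^+ 2 == u) 1.

Lemma nrootsE u : nroots u = 1 + eta u.
Proof.
rewrite /nroots sumr_const.
have [->|un0] := eqVneq u 0.
  rewrite eta0 addr0.
  have -> : #|[pred y : F | y ^+ 2 == 0]| = 1%N.
    rewrite -[RHS](card1 (0 : F)); apply: eq_card => y; rewrite !inE /=.
    by rewrite sqrf_eq0.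
  by [].
rewrite eta_nz //; case: existsP => [[y0 /eqP hy0]|hn].
  have y0n : y0 != - y0.
    apply/negP => /eqP h; have : y0 + y0 = 0 by rewrite {1}h addNr.
    move/eqP; rewrite -mulr2n -mulr_natr mulf_eq0 (negbTE (two_neq0 oddF)) orbF.
    by move=> /eqP y00; move: un0; rewrite -hy0 sqrf_eq0 y00 eqxx.
  have -> : #|[pred y : F | y ^+ 2 == u]| = #|[set y0; - y0]|.
    by apply: eq_card => y; rewrite !inE -hy0 eqf_sqr.
  by rewrite cards2 y0n.
have -> : #|[pred y : F | y ^+ 2 == u]| = 0%N.
  apply: eq_card0 => y; rewrite !inE; apply/negP => h; apply: hn; by exists y.
by rewrite mulr0n subrr.
Qed.

Lemma sum_nroots : \sum_u nroots u = #|F|%:R.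
Proof.
transitivity (\sum_(y : F) (1 : algC)); last by rewrite sumr_const.
by rewrite [RHS](partition_big (fun y : F => y ^+ 2) predT) //=.
Qed.


Lemma sum_eta : \sum_(u : F) eta u = 0.
Proof.
have := sum_nroots; under eq_bigr do rewrite nrootsE.
rewrite big_split /= sumr_const => h.
by apply: (addrI (#|F|%:R)); rewrite addr0 -[RHS]h.
Qed.

Lemma eta_pm (u : F) : u != 0 -> eta u = 1 \/ eta u = -1.
Proof. by move/eta_nz ->; case: ifP; [left|right]. Qed.

Lemma eta_ns (r u : F) : r != 0 -> eta r = -1 -> eta (r * u) = - eta u.
Proof.
move=> rn0 er.
pose D (u : F) := - (eta u + eta (r * u)).
have Dge0 : forall u, true -> 0 <= D u.
  move=> v _; rewrite /D.
  have [->|vn0] := eqVneq v 0; first by rewrite mulr0 eta0 addr0 oppr0.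
  have := eta_nz vn0; case: existsP => [[y /eqP hy]|_] ev.
    have yn0 : y != 0 by apply: contraNneq vn0 => y0; rewrite -hy y0 expr0n.
    by rewrite ev -hy mulrC eta_sq // er subrr oppr0.
  rewrite ev; case: (eta_pm (mulf_neq0 rn0 vn0)) => ->.
    by rewrite addNr oppr0.
  by rewrite -opprD opprK addr_ge0 ?ler01.
have sD : \sum_(v : F) D v = 0.
  rewrite /D sumrN big_split /= sum_eta.
  have -> : \sum_(i : F) eta (r * i) = \sum_(i : F) eta i.
    by symmetry; exact: (reindex_inj (mulfI rn0)).
  rewrite sum_eta.
  by rewrite addr0 oppr0.
have := psumr_eq0P Dge0 sD (i := u) erefl.
by rewrite /D => /eqP; rewrite oppr_eq0 addrC addr_eq0 => /eqP.
Qed.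

Lemma etaM (a b : F) : eta (a * b) = eta a * eta b.
Proof.
have [->|an0] := eqVneq a 0; first by rewrite mul0r eta0 mul0r.
have [->|bn0] := eqVneq b 0; first by rewrite mulr0 eta0 mulr0.
have := eta_nz an0; case: existsP => [[y /eqP hy]|_] ea.
  have yn0 : y != 0 by apply: contraNneq an0 => y0; rewrite -hy y0 expr0n.
  by rewrite ea mul1r -hy eta_sq.
by rewrite ea eta_ns // mulN1r.
Qed.

End Quad.


Lemma sum_row_prod (F : finFieldType) (d : nat) (f : 'I_d -> F -> algC) :
  \sum_(x : 'rV[F]_d) \prod_(i < d) f i (x ord0 i) = \prod_(i < d) \sum_(t : F) f i t.
Proof.
rewrite bigA_distr_bigA /=.
rewrite (reindex (fun x : 'rV[F]_d => [ffun i => x ord0 i])) /=.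
  by apply: eq_bigr => x _; apply: eq_bigr => i _; rewrite ffunE.
exists (fun g : {ffun 'I_d -> F} => \row_i g i) => [x _|g _].
  by apply/rowP => i; rewrite mxE ffunE.
by apply/ffunP => i; rewrite ffunE mxE.
Qed.

Section Gauss.
Variable F : finFieldType.
Variable chi : F -> algC.
Hypothesis chi0 : chi 0 = 1.
Hypothesis chiD : forall x y, chi (x + y) = chi x * chi y.
Hypothesis chint : exists x, chi x != 1.
Hypothesis oddF : odd #|F|.

Lemma gauss_sq r : r != 0 -> \sum_t chi (r * t ^+ 2) = eta r * gauss1 chi.
Proof.
move=> rn0.
rewrite (partition_big (fun y : F => y ^+ 2) predT) //=.
have -> : \sum_(u : F) \sum_(t | true && (t ^+ 2 == u)) chi (r * t ^+ 2)
        = \sum_(u : F) nroots u * chi (r * u).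
  apply: eq_bigr => u _; rewrite /nroots mulr_suml.
  by apply: eq_bigr => t /eqP ->; rewrite mul1r.
under eq_bigr do rewrite nrootsE // mulrDl mul1r.
rewrite big_split /=.
have -> : \sum_(u : F) chi (r * u) = 0.
  under eq_bigr do rewrite mulrC.
  by rewrite (sum_chi_mul chi0 chiD chint) (negbTE rn0).
rewrite add0r /gauss1 mulr_sumr.
rewrite [RHS]big_mkcond /=.
rewrite [RHS](reindex_inj (mulfI rn0)) /=.
apply: eq_bigr => u _.
case: ifP => [_|/negbFE hu]; last first.
  by move: hu; rewrite mulf_eq0 (negbTE rn0) /= => /eqP ->; rewrite eta0 !mul0r.
by rewrite (etaM oddF) !mulrA -expr2 eta_sqr // mul1r.
Qed.

Lemma gauss_lin r s v : r != 0 ->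
  \sum_t chi (r * t ^+ 2 + 2%:R * s * v * t) = chi (- (s ^+ 2 * v ^+ 2 / r)) * (eta r * gauss1 chi).
Proof.
move=> rn0; rewrite -gauss_sq // mulr_sumr.
rewrite (reindex_inj (addIr (- (s * v / r)))) /=.
apply: eq_bigr => t _; rewrite -chiD; congr chi.
by field.
Qed.

End Gauss.


Section Main.
Variable F : finFieldType.
Variable chi : F -> algC.
Hypothesis chi0 : chi 0 = 1.
Hypothesis chiD : forall x y, chi (x + y) = chi x * chi y.
Hypothesis chint : exists x, chi x != 1.
Hypothesis oddF : odd #|F|.
Variable d : nat.
Variables A B : {set 'rV[F]_d}.

Local Notation Q := (#|F|%:R : algC).
Local Notation V := 'rV[F]_d.

Lemma Q_neq0 : Q != 0.
Proof. by rewrite pnatr_eq0 -lt0n; apply/card_gt0P; exists 0. Qed.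

Lemma indicE (x y : F) : ((x == y)%:R : algC) = Q^-1 * \sum_s chi (s * x) * chi (- (s * y)).
Proof.
have -> : \sum_s chi (s * x) * chi (- (s * y)) = \sum_s chi (s * (x - y)).
  by apply: eq_bigr => s _; rewrite -chiD mulrBr.
rewrite (sum_chi_mul chi0 chiD chint) subr_eq0.
by case: eqP => _; rewrite ?mulr0 // mulVf ?Q_neq0.
Qed.

Definition Pp (p : V * V) := (p.1 \in A) && (p.2 \in B).
Definition Np (p : V * V) := qnorm (p.1 - p.2).

Lemma muE t : ((mu A B t)%:R : algC) = \sum_(p | Pp p) ((Np p == t)%:R).
Proof.
rewrite /mu -(sum1dep_card (fun p : V * V => Pp p && (Np p == t))) natr_sum.
rewrite big_mkcondr /=; apply: eq_bigr => p _; by case: ifP.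
Qed.

Definition Wp s := \sum_(p | Pp p) chi (s * Np p).

Lemma conjWp s : (Wp s)^* = \sum_(p | Pp p) chi (- (s * Np p)).
Proof. rewrite /Wp rmorph_sum; apply: eq_bigr => p _; exact: chi_conj. Qed.

Lemma lhsE : \sum_(t : F) ((mu A B t)%:R : algC) ^+ 2 = Q^-1 * \sum_s `|Wp s| ^+ 2.
Proof.
under eq_bigr do rewrite muE expr2 mulr_suml.
rewrite exchange_big /=.
have -> : \sum_(p | Pp p) \sum_t (Np p == t)%:R * (\sum_(p0 | Pp p0) (Np p0 == t)%:R)
        = \sum_(p | Pp p) \sum_(p0 | Pp p0) ((Np p0 == Np p)%:R : algC).
  apply: eq_bigr => p _; rewrite (bigD1 (Np p)) //= eqxx mul1r [X in _ + X]big1 ?addr0 //.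
  by move=> t /negbTE; rewrite eq_sym => ->; rewrite mul0r.
transitivity (Q^-1 * \sum_(p | Pp p) \sum_(p0 | Pp p0) \sum_s chi (s * Np p0) * chi (- (s * Np p))).
  rewrite mulr_sumr; apply: eq_bigr => p _; rewrite mulr_sumr; apply: eq_bigr => p0 _.
  exact: indicE.
congr (_ * _).
have -> : \sum_(p | Pp p) \sum_(p0 | Pp p0) \sum_s chi (s * Np p0) * chi (- (s * Np p))
   = \sum_(p | Pp p) \sum_s \sum_(p0 | Pp p0) chi (s * Np p0) * chi (- (s * Np p)).
  by apply: eq_bigr => p _; rewrite exchange_big.
rewrite exchange_big /=; apply: eq_bigr => s _.
rewrite normCK conjWp /Wp mulr_sumr; apply: eq_bigr => p _.
by rewrite mulr_suml.
Qed.

End Main.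


Lemma CS (I : finType) (A : {set I}) (f : I -> algC) :
  `|\sum_(i in A) f i| ^+ 2 <= #|A|%:R * \sum_(i in A) `|f i| ^+ 2.
Proof.
pose x i := `|f i|.
have xr : forall i, x i \is Num.real by move=> i; exact: normr_real.
apply: (le_trans (y := (\sum_(i in A) x i) ^+ 2)).
  apply: lerXn2r; rewrite ?nnegrE ?normr_ge0 //; last exact: ler_norm_sum.
  by apply: sumr_ge0 => i _; exact: normr_ge0.
have h0 : 0 <= \sum_(i in A) \sum_(k in A) (x i - x k) ^+ 2.
  by apply: sumr_ge0 => i _; apply: sumr_ge0 => k _; rewrite -realEsqr rpredB.
have hE : \sum_(i in A) \sum_(k in A) (x i - x k) ^+ 2
   = 2%:R * (#|A|%:R * \sum_(i in A) x i ^+ 2 - (\sum_(i in A) x i) ^+ 2).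
  have -> : \sum_(i in A) \sum_(k in A) (x i - x k) ^+ 2
     = \sum_(i in A) (\sum_(k in A) x i ^+ 2 + \sum_(k in A) x k ^+ 2 - 2%:R * (x i * \sum_(k in A) x k)).
    apply: eq_bigr => i _; rewrite mulr_sumr mulr_sumr -big_split /= -sumrB.
    by apply: eq_bigr => k _; ring.
  rewrite sumrB big_split /= -!mulr_sumr -mulr_suml sumr_const exchange_big /= sumr_const.
  rewrite expr2; ring.
move: h0; rewrite hE pmulr_rge0 ?ltr0n // subr_ge0 => h.
by rewrite /x; under eq_bigr do rewrite -/(x _).
Qed.

Section Main2.
Variable F : finFieldType.
Variable chi : F -> algC.
Hypothesis chi0 : chi 0 = 1.
Hypothesis chiD : forall x y, chi (x + y) = chi x * chi y.
Hypothesis chint : exists x, chi x != 1.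
Hypothesis oddF : odd #|F|.
Variable d : nat.
Variables A B : {set 'rV[F]_d}.
Variable j : F.
Hypothesis hA : A \subset sphere d j.

Local Notation Q := (#|F|%:R : algC).
Local Notation V := 'rV[F]_d.

Definition dot (x y : V) := \sum_(i < d) x ord0 i * y ord0 i.

Lemma qnormB (x y : V) : qnorm (x - y) = qnorm x - 2%:R * dot x y + qnorm y.
Proof.
rewrite /qnorm /dot mulr_sumr -sumrB -big_split /=; apply: eq_bigr => i _.
rewrite !mxE; ring.
Qed.

Definition gs s (x : V) := \sum_(b in B) chi (s * (qnorm b - 2%:R * dot x b)).

Lemma Wp_eq s : Wp chi A B s = chi (s * j) * \sum_(a in A) gs s a.
Proof.
rewrite /Wp /Pp -(pair_big (fun a => a \in A) (fun b => b \in B) (fun a b => chi (s * qnorm (a - b)))) /=.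
rewrite mulr_sumr; apply: eq_bigr => a aA.
have : a \in sphere d j by apply: (subsetP hA).
rewrite inE => /eqP ha.
rewrite /gs mulr_sumr; apply: eq_bigr => b _.
by rewrite -chiD qnormB ha; congr chi; ring.
Qed.

End Main2.


Section Main3.
Variable F : finFieldType.
Variable chi : F -> algC.
Hypothesis chi0 : chi 0 = 1.
Hypothesis chiD : forall x y, chi (x + y) = chi x * chi y.
Hypothesis chint : exists x, chi x != 1.
Hypothesis oddF : odd #|F|.
Variable d : nat.

Local Notation Q := (#|F|%:R : algC).
Local Notation V := 'rV[F]_d.

Definition Kt r s (v : V) (x : V) := \prod_(i < d) chi (r * x ord0 i ^+ 2 + 2%:R * s * v ord0 i * x ord0 i).

Lemma KtE r s (v : V) : s != 0 ->
  \sum_(x : V) Kt r s v x =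
  if r == 0 then (if v == 0 then Q ^+ d else 0)
  else (eta r * gauss1 chi) ^+ d * chi (- (s ^+ 2 * qnorm v / r)).
Proof.
move=> sn0; rewrite /Kt (sum_row_prod (fun i t => chi (r * t ^+ 2 + 2%:R * s * v ord0 i * t))).
case: eqP => [->|/eqP rn0].
  have h i : \sum_t chi (0 * t ^+ 2 + 2%:R * s * v ord0 i * t) = if v ord0 i == 0 then Q else 0.
    have -> : (v ord0 i == 0) = (2%:R * s * v ord0 i == 0).
      by rewrite !mulf_eq0 (negbTE (two_neq0 oddF)) (negbTE sn0).
    rewrite -(sum_chi_mul chi0 chiD chint); apply: eq_bigr => t _.
    by rewrite mul0r add0r mulrC.
  under eq_bigr do rewrite h.
  case: eqP => [->|/eqP vn0].
    by rewrite (eq_bigr (fun _ => Q)) ?prodr_const ?card_ord // => i _; rewrite mxE eqxx.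
  have [i hi] : exists i, v ord0 i != 0.
    apply/existsP; apply: contraR vn0 => /existsPn hv; apply/eqP/rowP => i.
    by have := hv i; rewrite negbK mxE => /eqP.
  by rewrite (bigD1 i) //= (negbTE hi) mul0r.
under eq_bigr do rewrite (gauss_lin chi0 chiD chint oddF) //.
rewrite big_split /= prodr_const card_ord mulrC; congr (_ * _).
rewrite -(chi_sum chi0 chiD) /qnorm mulr_sumr mulr_suml -sumrN.
congr chi; apply: eq_bigr => i _; ring.
Qed.


Variable B : {set V}.
Variable j : F.

Lemma termE r s (x b b' : V) :
  chi (r * qnorm x) * chi (- (r * j)) *
    (chi (s * (qnorm b - 2%:R * dot x b)) * chi (- (s * (qnorm b' - 2%:R * dot x b'))))
  = chi (- (r * j)) * chi (s * (qnorm b - qnorm b')) * Kt r s (b' - b) x.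
Proof.
rewrite /Kt -(chi_sum chi0 chiD) -!chiD.
have -> : \sum_(i < d) (r * x ord0 i ^+ 2 + 2%:R * s * (b' - b) ord0 i * x ord0 i)
    = r * qnorm x + 2%:R * s * (dot x b' - dot x b).
  rewrite /qnorm /dot -sumrB !mulr_sumr -big_split /=.
  by apply: eq_bigr => i _; rewrite !mxE; ring.
congr chi; ring.
Qed.

Definition Rs s := \sum_(r | r != 0) \sum_(b in B) \sum_(b' in B)
  chi (- (r * j)) * chi (s * (qnorm b - qnorm b')) *
  ((eta r * gauss1 chi) ^+ d * chi (- (s ^+ 2 * qnorm (b' - b) / r))).

Lemma sphereE s : s != 0 ->
  \sum_(x in sphere d j) `|gs chi B s x| ^+ 2 = Q^-1 * (Q ^+ d * #|B|%:R + Rs s).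
Proof.
move=> sn0.
transitivity (\sum_(x : V) Q^-1 * \sum_r \sum_(b in B) \sum_(b' in B)
   chi (- (r * j)) * chi (s * (qnorm b - qnorm b')) * Kt r s (b' - b) x).
  rewrite big_mkcond /=; apply: eq_bigr => x _.
  rewrite inE.
  have -> : (if qnorm x == j then `|gs chi B s x| ^+ 2 else 0) = ((qnorm x == j)%:R) * `|gs chi B s x| ^+ 2.
    by case: eqP; rewrite ?mul1r ?mul0r.
  have hc : (gs chi B s x)^* = \sum_(b in B) chi (- (s * (qnorm b - 2%:R * dot x b))).
    by rewrite /gs rmorph_sum; apply: eq_bigr => b _; exact: chi_conj.
  rewrite (indicE chi0 chiD chint) normCK hc /gs -mulrA; congr (_ * _).
  rewrite mulr_suml; apply: eq_bigr => r _.
  rewrite mulr_suml mulr_sumr; apply: eq_bigr => b _.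
  have E : forall (c y : algC) (f : V -> algC), c * (y * \sum_(b0 in B) f b0) = \sum_(b0 in B) c * (y * f b0).
    by move=> c y f; rewrite mulr_sumr mulr_sumr.
  rewrite E; apply: eq_bigr => b' _.
  by rewrite termE.
rewrite -mulr_sumr; congr (_ * _).
transitivity (\sum_r \sum_(b in B) \sum_(b' in B) chi (- (r * j)) * chi (s * (qnorm b - qnorm b'))
   * \sum_(x : V) Kt r s (b' - b) x).
  rewrite exchange_big; apply: eq_bigr => r _; rewrite exchange_big; apply: eq_bigr => b _.
  rewrite exchange_big; apply: eq_bigr => b' _; by rewrite mulr_sumr.
rewrite (bigD1 0) //=; congr (_ + _).
  rewrite [RHS]mulr_natr -sumr_const; apply: eq_bigr => b bB.
  rewrite (bigD1 b) //= [X in _ + X]big1.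
    by rewrite KtE // !eqxx subrr mul0r oppr0 chi0 mul1r mulr0 chi0 subrr eqxx mul1r addr0.
  move=> b' /andP [_ hb]; rewrite KtE // eqxx subr_eq0 (negbTE hb); exact: mulr0.
apply: eq_bigr => r rn0; apply: eq_bigr => b _; apply: eq_bigr => b' _.
by rewrite KtE // (negbTE rn0).
Qed.

End Main3.


Lemma qnormN (F : finFieldType) d (v : 'rV[F]_d) : qnorm (- v) = qnorm v.
Proof. by rewrite /qnorm; apply: eq_bigr => i _; rewrite mxE sqrrN. Qed.

Section Main4.
Variable F : finFieldType.
Variable chi : F -> algC.
Hypothesis chi0 : chi 0 = 1.
Hypothesis chiD : forall x y, chi (x + y) = chi x * chi y.
Hypothesis chint : exists x, chi x != 1.
Hypothesis oddF : odd #|F|.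
Variable d : nat.
Variable B : {set 'rV[F]_d}.
Variable j : F.

Local Notation Q := (#|F|%:R : algC).
Local Notation V := 'rV[F]_d.

Definition Tsum := \sum_(b in B) \sum_(b' in B) \sum_(s : F | s != 0) \sum_(r : F | r != 0)
        (eta r) ^+ d * chi (j * r + s ^+ 2 * qnorm (b' - b) / r)
          * chi (s * (qnorm b' - qnorm b)).

Lemma sumRs : \sum_(s | s != 0) Rs chi B j s = eta (-1 : F) ^+ d * gauss1 chi ^+ d * Tsum.
Proof.
pose Y (s r : F) (b b' : V) := chi (- (r * j)) * chi (s * (qnorm b - qnorm b')) *
  ((eta r * gauss1 chi) ^+ d * chi (- (s ^+ 2 * qnorm (b' - b) / r))).
have -> : \sum_(s | s != 0) Rs chi B j s =
   \sum_(b in B) \sum_(b' in B) \sum_(s : F | s != 0) \sum_(r : F | r != 0) Y s r b b'.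
  rewrite /Rs.
  transitivity (\sum_(s : F | s != 0) \sum_(b in B) \sum_(b' in B) \sum_(r : F | r != 0) Y s r b b').
    apply: eq_bigr => s _; rewrite exchange_big; apply: eq_bigr => b _.
    by rewrite exchange_big.
  rewrite exchange_big; apply: eq_bigr => b _; by rewrite exchange_big.
rewrite /Tsum exchange_big mulr_sumr; apply: eq_bigr => b _.
rewrite mulr_sumr; apply: eq_bigr => b' _.
rewrite mulr_sumr; apply: eq_bigr => s _.
rewrite mulr_sumr.
rewrite [RHS](reindex_inj (@oppr_inj _)) /=.
rewrite (eq_bigl (fun r : F => - r != 0)); last by move=> r; rewrite oppr_eq0.
apply: eq_bigr => r rn0.
have rn0' : r != 0 by rewrite -oppr_eq0.
rewrite /Y -(mulN1r r) (etaM oddF).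
have he : eta (-1:F) ^+ d * eta (-1:F) ^+ d = 1.
  by rewrite -exprMn -expr2 eta_sqr ?oppr_eq0 ?oner_eq0 // expr1n.
have hc : chi (j * (-1 * r) + s ^+ 2 * qnorm (b' - b) / (-1 * r))
     = chi (- (r * j)) * chi (- (s ^+ 2 * qnorm (b - b') / r)).
  rewrite -chiD -opprB qnormN; congr chi; field; by rewrite rn0' oppr_eq0 oner_eq0.
rewrite hc !exprMn.
rewrite -[LHS]mul1r -he; ring.
Qed.

End Main4.


Lemma sum_subset_le (T : finType) (A S : {set T}) (h : T -> algC) :
  A \subset S -> (forall x, 0 <= h x) -> \sum_(x in A) h x <= \sum_(x in S) h x.
Proof.
move=> hAS h0.
rewrite [X in _ <= X](bigID (fun x => x \in A)) /=.
have -> : \sum_(i in S | i \in A) h i = \sum_(i in A) h i.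
  apply: eq_bigl => x; apply/andP/idP => [[] //|xA]; split=> //; exact: (subsetP hAS).
by rewrite lerDl sumr_ge0.
Qed.

Unset Implicit Arguments. Set Strict Implicit. Set Printing Implicit Defensive.

Theorem lemma6p4 (F : finFieldType) (chi : F -> algC) (d : nat) (j : F)
    (A B : {set 'rV[F]_d}) :
  odd #|F| ->
  additive_char chi -> nontrivial_char chi ->
  A \subset sphere d j ->
  \sum_(t : F) ((mu A B t)%:R : algC) ^+ 2 <=
    (#|A|%:R ^+ 2 * #|B|%:R ^+ 2) / #|F|%:R
    + (#|F|%:R ^+ d / #|F|%:R) * #|A|%:R * #|B|%:R
    + (#|F|%:R ^+ 2)^-1 * (eta (-1 : F)) ^+ d * (gauss1 chi) ^+ d * #|A|%:R *
      \sum_(b in B) \sum_(b' in B) \sum_(s : F | s != 0) \sum_(r : F | r != 0)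
        (eta r) ^+ d * chi (j * r + s ^+ 2 * qnorm (b' - b) / r)
          * chi (s * (qnorm b' - qnorm b)).
Proof.
move=> oddF [chi0 chiD] chint hA.
set Q := (#|F|%:R : algC).
have Qn0 : Q != 0 by exact: (Q_neq0 F).
have Qgt0 : 0 < Q by rewrite ltr0n; apply/card_gt0P; exists 0.
have Qige0 : 0 <= Q^-1 by rewrite invr_ge0 ltW.
rewrite (lhsE chi0 chiD chint) (bigD1 0) //=.
have W0 : Wp chi A B 0 = #|A|%:R * #|B|%:R.
  rewrite (Wp_eq chiD B hA) mul0r chi0 mul1r /gs.
  rewrite (eq_bigr (fun _ => #|B|%:R)) ?sumr_const ?mulr_natl //.
  move=> a _; rewrite (eq_bigr (fun _ => 1)) ?sumr_const //.
  by move=> b _; rewrite mul0r chi0.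
rewrite W0 normrM !normr_nat.
set Z := Tsum chi B j.
have H1 : \sum_(s | s != 0) `|Wp chi A B s| ^+ 2 <=
          \sum_(s : F | s != 0) #|A|%:R * (Q^-1 * (Q ^+ d * #|B|%:R + Rs chi B j s)).
  apply: ler_sum => s sn0.
  rewrite (Wp_eq chiD B hA) normrM (chi_norm chi0 chiD) mul1r.
  apply: le_trans (CS _ _) _.
  rewrite -(sphereE chi0 chiD chint oddF B j sn0).
  apply: ler_wpM2l; first exact: ler0n.
  by apply: sum_subset_le => // x; rewrite exprn_ge0 ?normr_ge0.
have H2 : \sum_(s : F | s != 0) #|A|%:R * (Q^-1 * (Q ^+ d * #|B|%:R + Rs chi B j s))
   = #|A|%:R * Q^-1 * (\sum_(s : F | s != 0) Q ^+ d * #|B|%:R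
        + eta (-1 : F) ^+ d * gauss1 chi ^+ d * Z).
  by rewrite -(sumRs chiD oddF B j) -big_split /= !mulr_sumr; apply: eq_bigr => s _; rewrite mulrA.
have H3 : \sum_(s : F | s != 0) Q ^+ d * #|B|%:R <= Q * (Q ^+ d * #|B|%:R).
  have -> : Q * (Q ^+ d * #|B|%:R) = \sum_(s : F) Q ^+ d * #|B|%:R.
    by rewrite sumr_const mulr_natl.
  rewrite [X in _ <= X](bigD1 0) //= lerDr.
  by rewrite mulr_ge0 // exprn_ge0 // ltW.
rewrite -/Q.
apply: (le_trans (y := Q^-1 * ((#|A|%:R * #|B|%:R) ^+ 2 + #|A|%:R * Q^-1 *
   (Q * (Q ^+ d * #|B|%:R) + eta (-1 : F) ^+ d * gauss1 chi ^+ d * Z)))).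
  apply: ler_wpM2l => //; rewrite lerD2l.
  apply: (le_trans H1); rewrite H2.
  apply: ler_wpM2l; first by rewrite mulr_ge0 ?ler0n.
  by rewrite lerD2r.
rewrite le_eqVlt; apply/orP; left; apply/eqP; rewrite /Z /Tsum; field; exact: Qn0.
Qed.
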